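(* There is an absolute constant $C>0$ such that for every $n\ge2$, all concave non-decreasing valuations $v_1,\dots,v_n:[0,1]\to\mathbb R_{\ge0}$ and all budgets $B_1,\dots,B_n>0$, the final allocation $y$ of the Estimate-and-Price auction (player $r_1$ receiving his allocation as specified by the auction, every other player $i$ receiving $x_i$ from Sell-Without-$r_1$) satisfies $\bar W(y)\ge\frac{1}{C\log n}\bar W^*$.
   Context: One divisible good (the interval $[0,1]$), $n\ge2$ players with valuations $v_i$ and budgets $B_i$. Let $\bar v_i(y)=\min\{v_i(y),B_i\}$ and $k=\lceil 8\log_2 n\rceil$. Liquid welfare: $\bar W(y)=\sum_i\min\{v_i(y_i),B_i\}$; $\bar W^*=\sup\{\bar W(y):y\in\mathbb R^n_{\ge0},\sum_iy_i=1\}$. Sell-Without-$r$ (for a player $r$): define $p:[0,\frac12]\to\mathbb R_{\ge0}$ by $p(t)=p_j=\frac{2^j}{8}\bar v_r(\frac12)$ for $t\in[\frac{j-1}{2k},\frac{j}{2k})$, $j=1,\dots,k$. The players other than $r$ are processed in a fixed arbitrary order; when player $i$'s turn comes, let $z_i$ be the total amount taken by earlier players; player $i$ takes $x_i\in[0,\frac12-z_i]$ maximizing $v_i(x_i)-\int_{z_i}^{z_i+x_i}p(t)\,dt$ subject to $\int_{z_i}^{z_i+x_i}p(t)\,dt\le B_i$, and pays $\pi_i=\int_{z_i}^{z_i+x_i}p(t)\,dt$. Estimate-and-Price: let $r_1=\arg\max_i\bar v_i(\frac12)$ and $r_2=\arg\max_{i\ne r_1}\bar v_i(\frac12)$ (fixed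 tie-breaking). Let $(x,\pi)$ be the outcome of Sell-Without-$r_1$ on players $[n]\setminus\{r_1\}$ and $(x',\pi')$ that of Sell-Without-$r_2$ on players $[n]\setminus\{r_2\}$. Each $i\ne r_1$ receives $x_i$ and pays $\pi_i$. Player $r_1$ receives $x'_{r_1}$ and pays $\pi'_{r_1}$ if $v_{r_1}(x'_{r_1})-\pi'_{r_1}\ge v_{r_1}(\frac12)-2\bar v_{r_2}(\frac12)$; otherwise he receives $\frac12$ and pays $2\bar v_{r_2}(\frac12)$. *)

(* Defs.v *)
From Stdlib Require Import Reals Lra Lia List Permutation.
Import ListNotations.
Open Scope R_scope.

(* Players are the naturals 0..n-1; valuations v i : R -> R (relevant on [0,1]). *)

Definition vbar (v : nat -> R -> R) (B : nat -> R) (i : nat) (y : R) : R :=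
  Rmin (v i y) (B i).

Definition sumR (l : list nat) (f : nat -> R) : R :=
  fold_right (fun i acc => f i + acc) 0 l.

Definition players (n : nat) : list nat := seq 0 n.

Definition LW (n : nat) (v : nat -> R -> R) (B : nat -> R) (y : nat -> R) : R :=
  sumR (players n) (fun i => vbar v B i (y i)).

Definition feasible (n : nat) (y : nat -> R) : Prop :=
  (forall i, (i < n)%nat -> 0 <= y i) /\ sumR (players n) y = 1.

(* the set of achievable liquid welfares; \bar W^* is its least upper bound *)
Definition LW_values (n : nat) (v : nat -> R -> R) (B : nat -> R) (w : R) : Prop :=
  exists y, feasible n y /\ w = LW n v B y.

(* log base 2 and k = ceil (8 log2 n);  ceil x = 1 - up (-x) *)
Definition log2R (x : R) : R := ln x / ln 2.
Definition kpar (n : nat) : nat := Z.to_nat (1 - up (- (8 * log2R (INR n)))).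

(* The price function p on [0,1/2): p(t) = 2^j/8 * c on [(j-1)/(2k), j/(2k)),
   j = 1..k, where c = \bar v_r(1/2).  Its cumulative integral
   Pcum c k t = \int_0^t p(s) ds  for t in [0,1/2], written out as the sum over
   steps of (height) * (length of [0,t] ∩ [(j-1)/(2k), j/(2k))). *)
Definition step_overlap (k j : nat) (t : R) : R :=
  Rmax 0 (Rmin t (INR j / (2 * INR k)) - INR (j - 1) / (2 * INR k)).

Definition Pcum (c : R) (k : nat) (t : R) : R :=
  sumR (seq 1 k) (fun j => (2 ^ j / 8 * c) * step_overlap k j t).

Definition cost (c : R) (k : nat) (z x : R) : R := Pcum c k (z + x) - Pcum c k z.

Definition best_response (v : nat -> R -> R) (B : nat -> R) (c : R) (k : nat)
  (i : nat) (z xi : R) : Prop :=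
  0 <= xi <= 1/2 - z /\ cost c k z xi <= B i /\
  forall x', 0 <= x' <= 1/2 - z -> cost c k z x' <= B i ->
    v i x' - cost c k z x' <= v i xi - cost c k z xi.

Fixpoint sell_run (v : nat -> R -> R) (B : nat -> R) (c : R) (k : nat)
  (order : list nat) (z : R) (x pi : nat -> R) : Prop :=
  match order with
  | [] => True
  | i :: rest =>
      best_response v B c k i z (x i) /\ pi i = cost c k z (x i) /\
      sell_run v B c k rest (z + x i) x pi
  end.

Definition SellWithout (n : nat) (v : nat -> R -> R) (B : nat -> R) (r : nat)
  (x pi : nat -> R) : Prop :=
  exists order,
    Permutation order (filter (fun i => negb (Nat.eqb i r)) (players n)) /\
    sell_run v B (vbar v B r (1/2)) (kpar n) order 0 x pi.

Definition EP_alloc (v : nat -> R -> R) (B : nat -> R) (r1 r2 : nat)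
  (x x' pi' : nat -> R) (i : nat) : R :=
  if Nat.eqb i r1 then
    (if Rle_dec (v r1 (1/2) - 2 * vbar v B r2 (1/2)) (v r1 (x' r1) - pi' r1)
     then x' r1 else 1/2)
  else x i.

Definition concave_on01 (f : R -> R) : Prop :=
  forall a b t, 0 <= a <= 1 -> 0 <= b <= 1 -> 0 <= t <= 1 ->
    t * f a + (1 - t) * f b <= f (t * a + (1 - t) * b).

Definition nondecr_on01 (f : R -> R) : Prop :=
  forall a b, 0 <= a -> a <= b -> b <= 1 -> f a <= f b.

Definition nonneg_on01 (f : R -> R) : Prop :=
  forall a, 0 <= a <= 1 -> 0 <= f a.

(* Main.v *)
Require Import Defs.
From Stdlib Require Import Reals Lra Lia List Permutation ZArith.
Import ListNotations.
Open Scope R_scope.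

Lemma sumR_app l1 l2 f : sumR (l1 ++ l2) f = sumR l1 f + sumR l2 f.
Proof. induction l1; simpl; [lra| rewrite IHl1; lra]. Qed.

Lemma sumR_perm l l' f : Permutation l l' -> sumR l f = sumR l' f.
Proof. induction 1; simpl; lra. Qed.

Lemma sumR_ext l f g : (forall i, In i l -> f i = g i) -> sumR l f = sumR l g.
Proof. induction l; simpl; intros H; [lra|]. rewrite H by auto. rewrite IHl; auto. Qed.

Lemma sumR_le l f g : (forall i, In i l -> f i <= g i) -> sumR l f <= sumR l g.
Proof. induction l; simpl; intros H; [lra|].
  assert (f a <= g a) by auto. assert (sumR l f <= sumR l g) by auto. lra. Qed.

Lemma sumR_plus l f g : sumR l (fun i => f i + g i) = sumR l f + sumR l g.
Proof. induction l; simpl; [lra| rewrite IHl; lra]. Qed.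

Lemma sumR_minus l f g : sumR l (fun i => f i - g i) = sumR l f - sumR l g.
Proof. induction l; simpl; [lra| rewrite IHl; lra]. Qed.

Lemma sumR_scal l a f : sumR l (fun i => a * f i) = a * sumR l f.
Proof. induction l; simpl; [lra| rewrite IHl; lra]. Qed.

Lemma sumR_nonneg l f : (forall i, In i l -> 0 <= f i) -> 0 <= sumR l f.
Proof. induction l; simpl; intros H; [lra|].
  assert (0 <= f a) by auto. assert (0 <= sumR l f) by auto. lra. Qed.

Lemma sumR_mem l f i : (forall j, In j l -> 0 <= f j) -> In i l -> f i <= sumR l f.
Proof. induction l; simpl; intros H Hi; [contradiction|].
  destruct Hi as [->|Hi].
  - assert (0 <= sumR l f) by (apply sumR_nonneg; auto). lra.
  - assert (0 <= f a) by auto. assert (f i <= sumR l f) by auto. lra. Qed.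

Lemma sumR_const l a : sumR l (fun _ => a) = INR (length l) * a.
Proof. induction l; simpl length; [simpl; lra|]. rewrite S_INR. simpl. rewrite IHl. lra. Qed.

Lemma filter_notin r l : ~ In r l -> filter (fun i => negb (Nat.eqb i r)) l = l.
Proof. induction l; simpl; intros H; auto.
  destruct (Nat.eqb_spec a r); [exfalso; auto|]. simpl. rewrite IHl; auto. Qed.

Lemma sumR_split l f r : NoDup l -> In r l ->
  sumR l f = f r + sumR (filter (fun i => negb (Nat.eqb i r)) l) f.
Proof. induction l; simpl; intros Hn Hi; [contradiction|].
  inversion Hn; subst.
  destruct (Nat.eqb_spec a r).
  - subst. simpl. rewrite filter_notin; auto.
  - simpl. destruct Hi as [->|Hi]; [congruence|]. rewrite (IHl H2 Hi). lra. Qed.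

Lemma ov_nonneg k j t : 0 <= step_overlap k j t.
Proof. unfold step_overlap. apply Rmax_l. Qed.

Lemma ov_mono k j a b : a <= b -> step_overlap k j a <= step_overlap k j b.
Proof. intros. unfold step_overlap, Rmax, Rmin.
  repeat destruct Rle_dec; lra. Qed.

Lemma ov_tele k K t : (0 < k)%nat -> 0 <= t ->
  sumR (seq 1 K) (fun m => step_overlap k m t) = Rmin t (INR K / (2 * INR k)).
Proof. intros Hk Ht. induction K.
  - simpl. replace (0 / (2*INR k)) with 0 by (unfold Rdiv; ring).
    unfold Rmin. destruct Rle_dec; lra.
  - rewrite seq_S, sumR_app, IHK. simpl sumR.
    unfold step_overlap. replace (1 + K - 1)%nat with K by lia.
    replace (S K - 1)%nat with K by lia.
    replace (1 + K)%nat with (S K) by lia. rewrite S_INR.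
    assert (HK: 0 < INR k) by (apply lt_0_INR; auto).
    assert (E: (INR K + 1) / (2 * INR k) = INR K / (2 * INR k) + / (2 * INR k)) by (field; lra).
    rewrite E.
    assert (0 < / (2 * INR k)) by (apply Rinv_0_lt_compat; lra).
    set (A := INR K / (2 * INR k)) in *. set (d := / (2 * INR k)) in *.
    unfold Rmin, Rmax. repeat destruct Rle_dec; lra. Qed.

Lemma ov_diff_sum k a b : (0 < k)%nat -> 0 <= a <= b ->
  sumR (seq 1 k) (fun m => step_overlap k m b - step_overlap k m a) <= b - a.
Proof. intros Hk Hab. rewrite sumR_minus, !ov_tele by (auto; lra).
  unfold Rmin. repeat destruct Rle_dec; lra. Qed.

Lemma Pcum_mono c k a b : 0 <= c -> a <= b -> Pcum c k a <= Pcum c k b.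
Proof. intros Hc Hab. unfold Pcum. apply sumR_le. intros m _.
  apply Rmult_le_compat_l; [|apply ov_mono; auto].
  assert (0 < 2 ^ m) by (apply pow_lt; lra). 
  apply Rmult_le_pos; [|lra]. unfold Rdiv. apply Rmult_le_pos; lra. Qed.

Lemma Pcum0 c k : (0 < k)%nat -> Pcum c k 0 = 0.
Proof. intros Hk. unfold Pcum.
  rewrite (sumR_ext _ _ (fun _ => 0)).
  - rewrite sumR_const. ring.
  - intros m Hm. replace (step_overlap k m 0) with 0; [ring|]. unfold step_overlap.
    assert (0 <= INR (m - 1) / (2 * INR k)).
    { assert (0 < INR k) by (apply lt_0_INR; auto).
      unfold Rdiv. apply Rmult_le_pos; [apply pos_INR|].
      left. apply Rinv_0_lt_compat; lra. }
    unfold Rmax, Rmin. repeat destruct Rle_dec; lra. Qed.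

Lemma Pcum_lower c k m t : 0 <= c -> (1 <= m <= k)%nat -> INR m / (2 * INR k) <= t ->
  2 ^ m / 8 * c * / (2 * INR k) <= Pcum c k t.
Proof. intros Hc Hm Ht. unfold Pcum.
  assert (HK: 0 < INR k) by (apply lt_0_INR; lia).
  assert (Hov: step_overlap k m t = / (2 * INR k)).
  { unfold step_overlap. rewrite minus_INR by lia. simpl INR.
    assert (E1: (INR m - 1) / (2 * INR k) = INR m / (2 * INR k) - / (2 * INR k)) by (field; lra).
    rewrite E1. assert (0 < / (2 * INR k)) by (apply Rinv_0_lt_compat; lra).
    set (A := INR m / (2 * INR k)) in *. set (d := / (2 * INR k)) in *.
    unfold Rmax, Rmin. repeat destruct Rle_dec; lra. }
  rewrite <- Hov.
  apply (sumR_mem _ (fun j => 2 ^ j / 8 * c * step_overlap k j t)).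
  - intros j _. apply Rmult_le_pos; [|apply ov_nonneg].
    assert (0 < 2 ^ j) by (apply pow_lt; lra). 
    apply Rmult_le_pos; [|lra]. unfold Rdiv. apply Rmult_le_pos; lra.
  - apply in_seq. lia. Qed.

Lemma Pcum_diff_le c k j a b : 0 <= c -> (0 < k)%nat -> 0 <= a <= b ->
  b <= INR (j + 1) / (2 * INR k) ->
  Pcum c k b - Pcum c k a <= 2 ^ (j + 1) / 8 * c * (b - a).
Proof. intros Hc Hk Hab Hb. unfold Pcum. rewrite <- sumR_minus.
  set (H := 2 ^ (j + 1) / 8 * c).
  assert (HK: 0 < INR k) by (apply lt_0_INR; lia).
  assert (HH: 0 <= H).
  { assert (0 < 2 ^ (j+1)) by (apply pow_lt; lra).
    unfold H. apply Rmult_le_pos; [|lra]. unfold Rdiv. apply Rmult_le_pos; lra. }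
  apply Rle_trans with (sumR (seq 1 k) (fun m => H * (step_overlap k m b - step_overlap k m a))).
  - apply sumR_le. intros m Hm. apply in_seq in Hm.
    destruct (Compare_dec.le_lt_dec m (j + 1)) as [Hmj|Hmj].
    + rewrite <- Rmult_minus_distr_l. apply Rmult_le_compat_r.
      * generalize (ov_mono k m a b ltac:(lra)). lra.
      * unfold H. apply Rmult_le_compat_r; auto. unfold Rdiv.
        apply Rmult_le_compat_r; [lra|]. apply Rle_pow; auto; lra.
    + assert (Z: forall t, t <= b -> step_overlap k m t = 0).
      { intros t Htb. unfold step_overlap.
        assert (INR (j+1) <= INR (m - 1)) by (apply le_INR; lia).
        assert (INR (j+1) / (2 * INR k) <= INR (m - 1) / (2 * INR k)).
        { unfold Rdiv. apply Rmult_le_compat_r; auto. left; apply Rinv_0_lt_compat; lra. }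
        unfold Rmax, Rmin. repeat destruct Rle_dec; lra. }
      rewrite (Z a), (Z b) by lra. lra.
  - rewrite sumR_scal. apply Rmult_le_compat_l; auto. apply ov_diff_sum; auto. Qed.

Lemma run_props v B c k x pi : forall order z, 0 <= z <= 1/2 ->
  sell_run v B c k order z x pi ->
  (z <= z + sumR order x <= 1/2 /\
  sumR order pi = Pcum c k (z + sumR order x) - Pcum c k z /\
  (forall i, In i order -> exists zi, 0 <= zi /\ zi + x i <= z + sumR order x /\
     best_response v B c k i zi (x i) /\ pi i = cost c k zi (x i))).
Proof. induction order as [|a rest IH]; intros z Hz Hrun.
  - simpl. rewrite Rplus_0_r. split; [split; lra|]. split; [lra|]. intros i [].
  - simpl in Hrun. destruct Hrun as [Hbr [Hpi Hrun]].
    destruct Hbr as [Hx Hbr'].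
    destruct (IH (z + x a) ltac:(lra) Hrun) as [H1 [H2 H3]].
    simpl sumR.
    replace (z + (x a + sumR rest x)) with (z + x a + sumR rest x) by ring.
    split; [split; lra|]. split.
    + rewrite H2, Hpi. unfold cost. lra.
    + intros i [<-|Hi].
      * exists z. split; [lra|]. split; [lra|]. split; [exact (conj Hx Hbr')|exact Hpi].
      * apply H3; auto. Qed.

Lemma cost0 c k z : cost c k z 0 = 0.
Proof. unfold cost. rewrite Rplus_0_r. ring. Qed.

Lemma br_pay v B c k i z xi : nonneg_on01 (v i) -> 0 < B i -> 0 <= z ->
  best_response v B c k i z xi ->
  0 <= xi <= 1/2 /\ cost c k z xi <= B i /\ cost c k z xi <= v i xi /\
  cost c k z xi <= vbar v B i xi /\ 0 <= vbar v B i xi.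
Proof. intros Hnn HB Hz [Hx [Hc Hopt]].
  assert (H0 := Hopt 0 ltac:(lra) ltac:(rewrite cost0; lra)).
  rewrite cost0 in H0. assert (0 <= v i 0) by (apply Hnn; lra).
  assert (0 <= v i xi) by (apply Hnn; lra).
  unfold vbar, Rmin. destruct Rle_dec; repeat split; lra. Qed.

Lemma deviation v B c k i z xi H D :
  concave_on01 (v i) -> nondecr_on01 (v i) -> nonneg_on01 (v i) -> 0 < B i ->
  0 <= z -> best_response v B c k i z xi -> 0 < H -> 0 < D ->
  (forall d, 0 <= d <= D -> z + xi + d <= 1/2 /\ cost c k z (xi + d) <= cost c k z xi + H * d) ->
  forall y, 0 <= y <= 1 -> vbar v B i y <= vbar v B i xi + H * y.
Proof. intros Hcc Hnd Hnn HB Hz Hbr HH HD Hp y Hy.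
  destruct (br_pay v B c k i z xi Hnn HB Hz Hbr) as [Hx [Hcb [Hcv _]]].
  destruct Hbr as [Hx' [_ Hopt]].
  set (pi := cost c k z xi) in *.
  assert (0 <= H * y) by (apply Rmult_le_pos; lra).
  destruct (Rle_dec y xi) as [Hyx|Hyx].
  - assert (v i y <= v i xi) by (apply Hnd; lra).
    unfold vbar, Rmin. repeat destruct Rle_dec; lra.
  - destruct (Req_dec pi (B i)) as [Heq|Hne].
    + unfold vbar, Rmin. repeat destruct Rle_dec; lra.
    + assert (Hpos: 0 < (B i - pi) / H) by (apply Rdiv_lt_0_compat; lra).
      set (dl := Rmin D (Rmin ((B i - pi) / H) (y - xi))).
      assert (Hd0: 0 < dl) by (unfold dl, Rmin; repeat destruct Rle_dec; lra).
      assert (Hd1: dl <= D) by (unfold dl, Rmin; repeat destruct Rle_dec; lra).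
      assert (Hd2: dl <= (B i - pi) / H) by (unfold dl, Rmin; repeat destruct Rle_dec; lra).
      assert (Hd3: dl <= y - xi) by (unfold dl, Rmin; repeat destruct Rle_dec; lra).
      assert (Hd2': H * dl <= B i - pi).
      { apply (Rmult_le_compat_l H) in Hd2; [|lra].
        replace (H * ((B i - pi) / H)) with (B i - pi) in Hd2 by (field; lra). lra. }
      destruct (Hp dl ltac:(lra)) as [Hf Hcost].
      assert (Hv := Hopt (xi + dl) ltac:(lra) ltac:(fold pi in Hcost; lra)).
      fold pi in Hcost.
      set (s := dl / (y - xi)).
      assert (Hs0: 0 < s) by (apply Rdiv_lt_0_compat; lra).
      assert (Hs1: s <= 1).
      { unfold s. apply (Rmult_le_reg_r (y - xi)); [lra|].
        unfold Rdiv. rewrite Rmult_assoc, Rinv_l by lra. lra. }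
      assert (Hdl: dl = s * (y - xi)) by (unfold s; field; lra).
      assert (Hconc := Hcc xi y (1 - s) ltac:(lra) ltac:(lra) ltac:(lra)).
      replace ((1 - s) * xi + (1 - (1 - s)) * y) with (xi + dl) in Hconc by (rewrite Hdl; ring).
      assert (Hk: s * (v i y - v i xi) <= s * (H * (y - xi))) by (rewrite Hdl in *; nra).
      apply Rmult_le_reg_l in Hk; auto.
      assert (H * (y - xi) <= H * y) by nra.
      unfold vbar, Rmin. repeat destruct Rle_dec; lra. Qed.

Lemma kpar_facts n : (2 <= n)%nat ->
  (8 <= kpar n)%nat /\ INR (kpar n) <= 18 * ln (INR n) /\ INR n <= 2 ^ (kpar n - 1).
Proof. intros Hn.
  assert (Hn2: 2 <= INR n) by (replace 2 with (INR 2) by (simpl; lra); apply le_INR; auto).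
  assert (Hl2 := ln_lt_2).
  assert (Hln: ln 2 <= ln (INR n)).
  { destruct (Req_dec (INR n) 2) as [E|E]; [rewrite E; lra|].
    left. apply ln_increasing; lra. }
  set (L := ln (INR n)) in *. set (l2 := ln 2) in *.
  set (a := 8 * log2R (INR n)).
  assert (Ha: a * l2 = 8 * L) by (unfold a, log2R; fold L l2; field; lra).
  assert (Ha8: 8 <= a).
  { apply (Rmult_le_reg_r l2); lra. }
  destruct (archimed (- a)) as [A1 A2].
  set (u := up (- a)) in *.
  assert (Hz: (0 <= 1 - u)%Z).
  { apply le_IZR. rewrite minus_IZR. simpl. lra. }
  assert (Hk: INR (kpar n) = 1 - IZR u).
  { unfold kpar. fold a. fold u. rewrite INR_IZR_INZ, Z2Nat.id by auto.
    rewrite minus_IZR. simpl. lra. }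
  assert (Hk8: (8 <= kpar n)%nat).
  { destruct (Compare_dec.le_lt_dec 8 (kpar n)) as [h|h]; auto.
    assert (INR (kpar n) <= INR 7) by (apply le_INR; lia). simpl in H. lra. }
  split; auto. split.
  - rewrite Hk. assert (a <= 16 * L).
    { apply (Rmult_le_reg_r l2); [lra|]. rewrite Ha. nra. }
    lra.
  - assert (E: INR (kpar n - 1) = INR (kpar n) - 1) by (rewrite minus_INR by lia; simpl; lra).
    assert (Hp: ln (2 ^ (kpar n - 1)) = INR (kpar n - 1) * l2) by (apply ln_pow; lra).
    assert (Hge: L <= ln (2 ^ (kpar n - 1))).
    { rewrite Hp, E, Hk. assert ((1 - IZR u - 1) * l2 >= (a - 1) * l2) by (apply Rle_ge; apply Rmult_le_compat_r; lra).
      lra. }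
    assert (0 < 2 ^ (kpar n - 1)) by (apply pow_lt; lra).
    destruct (Rle_dec (INR n) (2 ^ (kpar n - 1))) as [h|h]; auto.
    exfalso. assert (ln (2 ^ (kpar n - 1)) < L) by (apply ln_increasing; lra). lra. Qed.

Lemma find_step N D t : 0 <= t -> t < INR N * D ->
  exists m, (m < N)%nat /\ INR m * D <= t < INR (S m) * D.
Proof. intros Ht. induction N; intros HN.
  - simpl in HN. lra.
  - destruct (Rlt_dec t (INR N * D)) as [h|h].
    + destruct (IHN h) as [m [? ?]]. exists m; split; auto; lia.
    + exists N. split; [lia|]. split; lra. Qed.

Lemma in_ord n r ord i : Permutation ord (filter (fun i => negb (Nat.eqb i r)) (players n)) ->
  (In i ord <-> (i < n)%nat /\ i <> r).
Proof. intros Hp. split; intros H.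
  - apply (Permutation_in _ Hp) in H. apply filter_In in H as [H1 H2].
    unfold players in H1. apply in_seq in H1. split; [lia|].
    destruct (Nat.eqb_spec i r); simpl in H2; auto; discriminate.
  - apply (Permutation_in _ (Permutation_sym Hp)). apply filter_In. split.
    + unfold players. apply in_seq. lia.
    + destruct (Nat.eqb_spec i r); auto; tauto. Qed.

Lemma split_players n r ord f : (r < n)%nat ->
  Permutation ord (filter (fun i => negb (Nat.eqb i r)) (players n)) ->
  sumR (players n) f = f r + sumR ord f.
Proof. intros Hr Hp. rewrite (sumR_split _ _ r).
  - rewrite (sumR_perm _ _ _ (Permutation_sym Hp)). reflexivity.
  - apply seq_NoDup.
  - unfold players; apply in_seq; lia. Qed.

Lemma vbar_le2 v B i y : concave_on01 (v i) -> nondecr_on01 (v i) -> nonneg_on01 (v i) ->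
  0 < B i -> 0 <= y <= 1 -> 0 <= vbar v B i y <= 2 * vbar v B i (1/2).
Proof. intros Hc Hnd Hnn HB Hy.
  assert (H1 := Hc 1 0 (1/2) ltac:(lra) ltac:(lra) ltac:(lra)).
  replace (1/2 * 1 + (1 - 1/2) * 0) with (1/2) in H1 by ring.
  assert (0 <= v i 0) by (apply Hnn; lra).
  assert (0 <= v i y) by (apply Hnn; lra).
  assert (v i y <= v i 1) by (apply Hnd; lra).
  unfold vbar, Rmin. repeat destruct Rle_dec; lra. Qed.

Theorem mainTheorem17 :
  exists C : R, 0 < C /\
  forall (n : nat) (v : nat -> R -> R) (B : nat -> R),
    (2 <= n)%nat ->
    (forall i, (i < n)%nat ->
       concave_on01 (v i) /\ nondecr_on01 (v i) /\ nonneg_on01 (v i) /\ 0 < B i) ->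
  forall (r1 r2 : nat),
    (r1 < n)%nat ->
    (forall i, (i < n)%nat -> vbar v B i (1/2) <= vbar v B r1 (1/2)) ->
    (r2 < n)%nat -> r2 <> r1 ->
    (forall i, (i < n)%nat -> i <> r1 -> vbar v B i (1/2) <= vbar v B r2 (1/2)) ->
  forall (x pi x' pi' : nat -> R),
    SellWithout n v B r1 x pi ->
    SellWithout n v B r2 x' pi' ->
  forall Wstar : R, is_lub (LW_values n v B) Wstar ->
    LW n v B (EP_alloc v B r1 r2 x x' pi') >= Wstar / (C * ln (INR n)).
Proof.
  exists 1000. split; [lra|].
  intros n v B Hn Hv r1 r2 Hr1 Hmax1 Hr2 Hne Hmax2 x pi x' pi'
    [ord [Hperm Hrun]] [ord' [Hperm' Hrun']] W Hlub.
  destruct (kpar_facts n Hn) as [Hk8 [HkL Hpow]].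
  set (k := kpar n) in *.
  assert (HK0: (0 < k)%nat) by lia.
  set (K := INR k) in *.
  assert (HK8: 8 <= K) by (unfold K; replace 8 with (INR 8) by (simpl; lra); apply le_INR; auto).
  set (D := / (2 * K)).
  assert (HD: D * (2 * K) = 1) by (unfold D; field; lra).
  assert (HD0: 0 < D) by (unfold D; apply Rinv_0_lt_compat; lra).
  set (c := vbar v B r1 (1/2)) in *.
  set (c2 := vbar v B r2 (1/2)) in *.
  assert (Hvb: forall i y, (i < n)%nat -> 0 <= y <= 1 -> 0 <= vbar v B i y <= 2 * c).
  { intros i y Hi Hy. destruct (Hv i Hi) as [a [b [d e]]].
    destruct (vbar_le2 v B i y a b d e Hy). split; auto.
    assert (vbar v B i (1/2) <= c) by auto. lra. }
  assert (Hc2: 0 <= c2 <= c).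
  { split; [apply (Hvb r2 (1/2)); auto; lra|]. apply Hmax1; auto. }
  assert (Hc0: 0 <= c) by lra.
  destruct (run_props v B c k x pi ord 0 ltac:(lra) Hrun) as [Ht [Hrev Hmem]].
  rewrite Pcum0 in Hrev by auto. rewrite Rplus_0_l in Ht, Hmem, Hrev.
  set (t := sumR ord x) in *.
  set (Sx := sumR ord (fun i => vbar v B i (x i))).
  assert (Hord := fun i => in_ord n r1 ord i Hperm).
  assert (Hpay: forall i, In i ord -> exists zi, 0 <= zi /\ zi + x i <= t /\
     best_response v B c k i zi (x i) /\ 0 <= x i <= 1/2 /\ pi i <= vbar v B i (x i) /\ 0 <= vbar v B i (x i)).
  { intros i Hi. destruct (Hmem i Hi) as [zi [A1 [A2 [A3 A4]]]].
    destruct (proj1 (Hord i) Hi) as [Hin _]. destruct (Hv i Hin) as [_ [_ [Hnn HB]]].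
    destruct (br_pay v B c k i zi (x i) Hnn HB A1 A3) as [b1 [b2 [b3 [b4 b5]]]].
    exists zi. split; [lra|]. split; [lra|]. split; [exact A3|]. split; [lra|]. split; [|lra].
    rewrite A4; auto. }
  assert (HSrev: Pcum c k t <= Sx).
  { replace (Pcum c k t) with (sumR ord pi) by lra. apply sumR_le. intros i Hi. destruct (Hpay i Hi) as [zi [? [? [? [? [? ?]]]]]]. auto. }
  assert (HS0: 0 <= Sx).
  { apply sumR_nonneg. intros i Hi. destruct (Hpay i Hi) as [zi [? [? [? [? [? ?]]]]]]. auto. }
  set (R1 := vbar v B r1 (EP_alloc v B r1 r2 x x' pi' r1)).
  assert (HLW: LW n v B (EP_alloc v B r1 r2 x x' pi') = R1 + Sx).
  { unfold LW. rewrite (split_players n r1 ord) by auto. unfold R1, Sx. f_equal.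
    apply sumR_ext. intros i Hi. destruct (proj1 (Hord i) Hi) as [_ Hi1].
    unfold EP_alloc. destruct (Nat.eqb_spec i r1); [congruence|]. reflexivity. }
  assert (HR1: 0 <= R1 /\ c - 2 * c2 <= R1).
  { destruct (Hv r1 Hr1) as [_ [_ [Hnn HB]]].
    assert (Hin': In r1 ord') by (apply (in_ord n r2 ord' r1 Hperm'); auto).
    destruct (run_props v B c2 k x' pi' ord' 0 ltac:(lra) Hrun') as [_ [_ Hmem']].
    destruct (Hmem' r1 Hin') as [z' [B1 [B2 [B3 B4]]]].
    destruct (br_pay v B c2 k r1 z' (x' r1) Hnn HB B1 B3) as [b1 [b2 [b3 [b4 b5]]]].
    assert (Hp0: 0 <= cost c2 k z' (x' r1)).
    { unfold cost. assert (Pcum c2 k z' <= Pcum c2 k (z' + x' r1)) by (apply Pcum_mono; lra). lra. }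
    unfold R1, EP_alloc. rewrite Nat.eqb_refl.
    destruct Rle_dec as [h|h].
    - rewrite B4 in h. split; auto.
      assert (0 <= v r1 (1/2)) by (apply Hnn; lra).
      fold c2 in h. unfold c, vbar, Rmin in *. repeat destruct Rle_dec; lra.
    - fold c. lra. }
  assert (HWb: W <= 32 * K * (R1 + Sx)).
  { apply (proj2 Hlub). intros w [y [[Hy0 Hy1] ->]].
    assert (Hyle: forall i, (i < n)%nat -> 0 <= y i <= 1).
    { intros i Hi. split; auto. rewrite <- Hy1.
      apply (sumR_mem (players n) y i).
      - intros j Hj. unfold players in Hj; apply in_seq in Hj. apply Hy0; lia.
      - unfold players; apply in_seq; lia. }
    assert (H2nc: LW n v B y <= 2 * INR n * c).
    { unfold LW. apply Rle_trans with (sumR (players n) (fun _ => 2 * c)).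
      - apply sumR_le. intros i Hi. unfold players in Hi; apply in_seq in Hi.
        apply Hvb; [lia|]. apply Hyle; lia.
      - rewrite sumR_const. unfold players. rewrite length_seq. lra. }
    assert (HKRS: 256 * (R1 + Sx) <= 32 * K * (R1 + Sx)) by nra.
    destruct (Rle_dec c 0) as [hc|hc].
    { assert (c = 0) by lra. assert (2 * INR n * c = 0) by (rewrite H; ring). lra. }
    destruct (Rlt_dec t (INR (k - 1) * D)) as [hb|ha].
    2:{
      assert (Hl := Pcum_lower c k (k - 1) t Hc0 ltac:(lia) ltac:(unfold Rdiv; fold K; fold D; lra)).
      fold K D in Hl.
      set (P2 := 2 ^ (k - 1)) in *.
      assert (E: P2 * c = 16 * K * (P2 / 8 * c * D)) by (unfold D; field; lra).
      assert (INR n * c <= P2 * c) by (apply Rmult_le_compat_r; lra).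
      assert (16 * K * (P2 / 8 * c * D) <= 16 * K * Sx) by (apply Rmult_le_compat_l; lra).
      nra. }
    destruct (find_step (k - 1) D t (proj1 Ht) hb) as [m [Hm [Hmt1 Hmt2]]].
    set (h := 2 ^ m / 8 * c).
    set (H := 2 ^ (S m + 1) / 8 * c).
    assert (HHh: H = 4 * h).
    { unfold H, h. replace (S m + 1)%nat with (m + 2)%nat by lia. rewrite pow_add. simpl. field. }
    assert (Hh0: 0 < h).
    { unfold h. assert (0 < 2 ^ m) by (apply pow_lt; lra). apply Rmult_lt_0_compat; lra. }
    assert (HSm: INR (S m + 1) * D <= 1/2).
    { assert (INR (S m + 1) <= K) by (unfold K; apply le_INR; lia).
      assert (INR (S m + 1) * D <= K * D) by (apply Rmult_le_compat_r; lra). nra. }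
    assert (Ej: INR (S m + 1) * D = INR (S m) * D + D).
    { replace (S m + 1)%nat with (S (S m)) by lia. rewrite (S_INR (S m)). ring. }
    assert (Hdev: forall i, In i ord -> forall y, 0 <= y <= 1 -> vbar v B i y <= vbar v B i (x i) + H * y).
    { intros i Hi. destruct (Hpay i Hi) as [zi [Z1 [Z2 [Z3 [Z4 _]]]]].
      destruct (proj1 (Hord i) Hi) as [Hin _]. destruct (Hv i Hin) as [Hcc [Hnd [Hnn HB]]].
      apply (deviation v B c k i zi (x i) H D Hcc Hnd Hnn HB Z1 Z3 ltac:(lra) HD0).
      intros d Hd. split; [lra|].
      assert (Hdl := Pcum_diff_le c k (S m) (zi + x i) (zi + x i + d) Hc0 HK0 ltac:(lra)
        ltac:(unfold Rdiv; fold K; fold D; lra)).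
      fold H in Hdl. unfold cost.
      replace (zi + (x i + d)) with (zi + x i + d) by ring.
      replace (H * d) with (H * (zi + x i + d - (zi + x i))) by ring. lra. }
    assert (Hr2o: In r2 ord) by (apply Hord; auto).
    assert (Hc2b: c2 <= Sx + H / 2).
    { assert (A := Hdev r2 Hr2o (1/2) ltac:(lra)). fold c2 in A.
      assert (vbar v B r2 (x r2) <= Sx).
      { apply (sumR_mem ord (fun i => vbar v B i (x i))); auto.
        intros j Hj. destruct (Hpay j Hj) as [zi [? [? [? [? [? ?]]]]]]. auto. }
      lra. }
    assert (Hoth: sumR ord (fun i => vbar v B i (y i)) <= Sx + H).
    { apply Rle_trans with (sumR ord (fun i => vbar v B i (x i) + H * y i)).
      - apply sumR_le. intros i Hi. apply Hdev; auto. apply Hyle. apply Hord; auto.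
      - rewrite sumR_plus, sumR_scal. fold Sx.
        assert (E := split_players n r1 ord y Hr1 Hperm). fold (players n) in Hy1.
        assert (0 <= y r1) by (apply Hy0; auto). nra. }
    assert (Hlw: LW n v B y <= 2 * c + Sx + H).
    { unfold LW. rewrite (split_players n r1 ord) by auto.
      assert (vbar v B r1 (y r1) <= 2 * c) by (apply Hvb; auto). lra. }
    destruct m as [|m'].
    + assert (h = c / 8) by (unfold h; simpl; field). lra.
    + assert (Hl := Pcum_lower c k (S m') t Hc0 ltac:(lia) ltac:(unfold Rdiv; fold K; fold D; lra)).
      fold h K D in Hl.
      assert (Hh2: h <= 2 * K * Sx).
      { replace h with (h * D * (2 * K)) by (rewrite Rmult_assoc, HD; ring).
        replace (2 * K * Sx) with (Sx * (2 * K)) by ring.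
        apply Rmult_le_compat_r; lra. }
      assert (Sx <= K * Sx) by nra.
      assert (R1 <= K * R1) by nra. nra. }
  assert (HL: K <= 18 * ln (INR n)) by auto.
  assert (HLp: 0 < ln (INR n)) by lra.
  assert (0 <= R1 + Sx) by lra.
  rewrite HLW. apply Rle_ge.
  apply (Rmult_le_reg_r (1000 * ln (INR n))); [lra|].
  unfold Rdiv. rewrite Rmult_assoc, Rinv_l, Rmult_1_r by lra.
  assert (32 * K * (R1 + Sx) <= 1000 * ln (INR n) * (R1 + Sx)) by (apply Rmult_le_compat_r; lra).
  nra.
Qed.
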